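(* Let $Q$ be an indefinite ternary quadratic form with $\det Q=1$. There is a constant $c>0$ depending only on $Q$ such that the following holds. Let $L\subset\mathbb{R}^3$ be a plane and let $\mathbf{m}_1,\mathbf{m}_2,\mathbf{m}_3\in\mathbb{Z}^3\cap L$ be such that no two of them lie on a common line through the origin. If $0\le\epsilon<1$, $R>1$, $|Q(\mathbf{m}_i)|\le\epsilon$ and $R<\|\mathbf{m}_i\|<R^2$ for all $1\le i\le 3$, then $\epsilon\ge cR^{-64}$.
   Context: $\|\cdot\|$ is the supremum norm on $\mathbb{R}^3$. *)

(* Defs.v *)
From HB Require Import structures.
From mathcomp Require Import all_boot all_order all_algebra.
From mathcomp Require Import reals.
Set Implicit Arguments. Unset Strict Implicit. Unset Printing Implicit Defensive.
Import Order.TTheory GRing.Theory Num.Theory.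
Local Open Scope ring_scope.

Definition qform (R : realType) (A : 'M[R]_3) (x : 'rV[R]_3) : R :=
  (x *m A *m x^T) 0 0.

Definition is_symmetric (R : realType) (A : 'M[R]_3) : Prop := A^T = A.

Definition indefinite (R : realType) (A : 'M[R]_3) : Prop :=
  (exists x, 0 < qform A x) /\ (exists y, qform A y < 0).

Definition supnorm (R : realType) (x : 'rV[R]_3) : R :=
  \big[Num.max/0]_(i < 3) `|x 0 i|.

Definition zvec (R : realType) (m : 'rV[int]_3) : 'rV[R]_3 :=
  map_mx (fun z : int => z%:~R) m.

Definition is_plane (R : realType) (L : {vspace 'rV[R]_3}) : Prop :=
  \dim L = 2%N.

Definition is_line (R : realType) (l : {vspace 'rV[R]_3}) : Prop :=
  \dim l = 1%N.

Definition not_on_common_line (R : realType) (a b : 'rV[R]_3) : Prop :=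
  forall l : {vspace 'rV[R]_3}, is_line l -> ~ (a \in l /\ b \in l).

(* Main.v *)
Require Import Defs.
From HB Require Import structures.
From mathcomp Require Import all_boot all_order all_algebra.
From mathcomp Require Import reals ring lra.
Import Order.TTheory GRing.Theory Num.Theory.
Set Implicit Arguments. Unset Strict Implicit. Unset Printing Implicit Defensive.
Local Open Scope ring_scope.

Section H.
Variable R : realType.
Implicit Types x y z w X Y s : R.

Lemma prod_bound x y X Y : `|x| <= X -> `|y| <= Y -> `|x * y| <= X * Y.
Proof. by move=> hx hy; rewrite normrM; apply: ler_pM. Qed.

Lemma cr_bound x y z w s : `|x| <= s -> `|y| <= s -> `|z| <= s -> `|w| <= s ->
  `|x * y - z * w| <= 2 * s ^+ 2.
Proof.
move=> hx hy hz hw; apply: le_trans (ler_normB _ _) _.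
have := prod_bound hx hy; have := prod_bound hz hw; rewrite expr2; lra.
Qed.

Lemma sq_bound x X : `|x| <= X -> x * x <= X * X.
Proof. by move=> h; apply: le_trans (ler_norm _) (prod_bound h h). Qed.

Lemma dot3_bound x0 x1 x2 y0 y1 y2 X Y : `|x0| <= X -> `|x1| <= X -> `|x2| <= X ->
  `|y0| <= Y -> `|y1| <= Y -> `|y2| <= Y -> `|x0 * y0 + x1 * y1 + x2 * y2| <= 3 * (X * Y).
Proof.
move=> h0 h1 h2 k0 k1 k2.
have := prod_bound h0 k0; have := prod_bound h1 k1; have := prod_bound h2 k2.
have := ler_normD (x0 * y0 + x1 * y1) (x2 * y2); have := ler_normD (x0 * y0) (x1 * y1).
lra.
Qed.

Lemma det_small (g00 g01 g02 g10 g11 g12 g20 g21 g22 e M : R) :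
  `|g00| <= e -> `|g01| <= e -> `|g10| <= e -> `|g11| <= e ->
  `|g02| <= M -> `|g12| <= M -> `|g20| <= M -> `|g21| <= M -> `|g22| <= M ->
  `|g11| <= M -> `|g10| <= M ->
  `|g00 * (g11 * g22 - g12 * g21) - g01 * (g10 * g22 - g12 * g20)
     + g02 * (g10 * g21 - g11 * g20)| <= 6 * e * M ^+ 2.
Proof.
move=> h00 h01 h10 h11 h02 h12 h20 h21 h22 m11 m10.
have i1 : `|g11 * g22 - g12 * g21| <= M * M + M * M.
  apply: le_trans (ler_normB _ _) _; apply: lerD; exact: prod_bound.
have i2 : `|g10 * g22 - g12 * g20| <= M * M + M * M.
  apply: le_trans (ler_normB _ _) _; apply: lerD; exact: prod_bound.
have i3 : `|g10 * g21 - g11 * g20| <= e * M + e * M.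
  apply: le_trans (ler_normB _ _) _; apply: lerD; exact: prod_bound.
have t1 := prod_bound h00 i1; have t2 := prod_bound h01 i2; have t3 := prod_bound h02 i3.
have := ler_normB (g00 * (g11 * g22 - g12 * g21)) (g01 * (g10 * g22 - g12 * g20)).
have := ler_normD (g00 * (g11 * g22 - g12 * g21) - g01 * (g10 * g22 - g12 * g20))
   (g02 * (g10 * g21 - g11 * g20)).
rewrite expr2.
have -> : 6 * e * (M * M) = e * (M * M + M * M) + e * (M * M + M * M) + M * (e * M + e * M) by ring.
lra.
Qed.
End H.

Definition Bf (R : realType) (A : 'M[R]_3) (x y : 'rV[R]_3) : R := (x *m A *m y^T) 0 0.
Definition Bc (R : realType) (A : 'M[R]_3) (x0 x1 x2 y0 y1 y2 : R) : R :=
  x0 * A 0 0 * y0 + x1 * A 1 0 * y0 + x2 * A 2 0 * y0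
   + (x0 * A 0 1 * y1 + x1 * A 1 1 * y1 + x2 * A 2 1 * y1)
   + (x0 * A 0 2 * y2 + x1 * A 1 2 * y2 + x2 * A 2 2 * y2).

Lemma row_inord (R : Type) (x : 'rV[R]_3) : x = \row_(j < 3) x 0 (inord j).
Proof. by apply/rowP => j; rewrite mxE inord_val. Qed.
Lemma mx_inord (R : Type) (x : 'M[R]_3) : x = \matrix_(i < 3, j < 3) x (inord i) (inord j).
Proof. by apply/matrixP => i j; rewrite mxE !inord_val. Qed.

Lemma B_sum (R : realType) (A : 'M[R]_3) x y :
  Bf A x y = \sum_k \sum_i x 0 i * A i k * y 0 k.
Proof.
rewrite /Bf !mxE; apply: eq_bigr => k _; rewrite !mxE big_distrl; apply: eq_bigr => i _.
by [].
Qed.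

Lemma B_coord (R : realType) (A : 'M[R]_3) x y :
  Bf A x y = Bc A (x 0 0) (x 0 1) (x 0 2) (y 0 0) (y 0 1) (y 0 2).
Proof.
rewrite /Bc (row_inord x) (row_inord y) (mx_inord A).
rewrite B_sum !big_ord_recr !big_ord0 /= !add0r !mxE /=.
by [].
Qed.

Lemma B_bound (R : realType) (A : 'M[R]_3) (x y : 'rV[R]_3) (X Y : R) :
  (forall i, `|x 0 i| <= X) -> (forall i, `|y 0 i| <= Y) ->
  `|Bf A x y| <= X * Y * \sum_k \sum_i `|A i k|.
Proof.
move=> hx hy; have X0 : 0 <= X by apply: le_trans (hx 0).
have Y0 : 0 <= Y by apply: le_trans (hy 0).
rewrite B_sum; apply: le_trans (ler_norm_sum _ _ _) _; rewrite mulr_sumr.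
apply: ler_sum => k _; apply: le_trans (ler_norm_sum _ _ _) _; rewrite mulr_sumr.
apply: ler_sum => i _; rewrite !normrM.
rewrite -mulrA [`|A i k| * _]mulrC mulrA [X * Y * _]mulrC.
by rewrite [`|A i k| * _]mulrC; apply: ler_wpM2r => //; apply: ler_pM.
Qed.

Lemma G_entry (R : realType) (A N : 'M[R]_3) i j :
  (N *m A *m N^T) i j = Bf A (row i N) (row j N).
Proof.
rewrite /Bf -row_mul !mxE; apply: eq_bigr => k _; rewrite !mxE; by [].
Qed.

Lemma det33 (R : comNzRingType) (M : 'M[R]_3) : \det M =
  M 0 0 * (M 1 1 * M 2 2 - M 1 2 * M 2 1)
- M 0 1 * (M 1 0 * M 2 2 - M 1 2 * M 2 0)
+ M 0 2 * (M 1 0 * M 2 1 - M 1 1 * M 2 0).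
Proof.
have -> : M = \matrix_(i < 3, j < 3) M (inord i) (inord j).
  by apply/matrixP => i j; rewrite mxE !inord_val.
rewrite (expand_det_row _ 0) !big_ord_recr big_ord0 /= add0r /cofactor.
rewrite !(expand_det_row _ 0) !big_ord_recr !big_ord0 /= !add0r /cofactor !det_mx11 !mxE /=.
ring.
Qed.

Definition vec3 (R : Type) (x0 x1 x2 : R) : 'rV[R]_3 := \row_(j < 3) nth x0 [:: x0; x1; x2] j.
Definition cross (R : pzRingType) (x y : 'rV[R]_3) : 'rV[R]_3 :=
  vec3 (x 0 1 * y 0 2 - x 0 2 * y 0 1) (x 0 2 * y 0 0 - x 0 0 * y 0 2)
       (x 0 0 * y 0 1 - x 0 1 * y 0 0).
Definition dot (R : pzRingType) (x y : 'rV[R]_3) : R := x 0 0 * y 0 0 + x 0 1 * y 0 1 + x 0 2 * y 0 2.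

Lemma cross0 (R : pzRingType) (x y : 'rV[R]_3) : cross x y 0 0 = x 0 1 * y 0 2 - x 0 2 * y 0 1.
Proof. by rewrite mxE. Qed.
Lemma cross1 (R : pzRingType) (x y : 'rV[R]_3) : cross x y 0 1 = x 0 2 * y 0 0 - x 0 0 * y 0 2.
Proof. by rewrite mxE. Qed.
Lemma cross2 (R : pzRingType) (x y : 'rV[R]_3) : cross x y 0 2 = x 0 0 * y 0 1 - x 0 1 * y 0 0.
Proof. by rewrite mxE. Qed.

Lemma ord3 (j : 'I_3) : j = 0 \/ j = 1 \/ j = 2.
Proof.
case: j => [[|[|[|//]]] Hj]; [left|right; left|right; right]; exact: val_inj.
Qed.

Lemma row3P (R : Type) (x y : 'rV[R]_3) :
  x 0 0 = y 0 0 -> x 0 1 = y 0 1 -> x 0 2 = y 0 2 -> x = y.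
Proof.
rewrite (row_inord x) (row_inord y) !mxE => h0 h1 h2; apply/rowP => j; rewrite !mxE.
by case: j => [[|[|[|//]]] Hj] /=.
Qed.

Lemma cross_bound (R : realType) (x y : 'rV[R]_3) s :
  (forall j, `|x 0 j| <= s) -> (forall j, `|y 0 j| <= s) ->
  forall j, `|cross x y 0 j| <= 2 * s ^+ 2.
Proof.
move=> hx hy j; case: (ord3 j) => [->|[->|->]];
  rewrite ?cross0 ?cross1 ?cross2; apply: cr_bound; (exact: hx || exact: hy).
Qed.

Lemma dimT (R : realType) : \dim (fullv : {vspace 'rV[R]_3}) = 3%N.
Proof. by rewrite dimvf. Qed.

Lemma core (R : realType) (A : 'M[R]_3) (L : {vspace 'rV[R]_3}) (a b d : 'rV[R]_3) (s eps : R) :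
 A^T = A -> \det A = 1 -> \dim L = 2%N ->
 a \in L -> b \in L -> d \in L ->
 not_on_common_line a b -> not_on_common_line d b -> not_on_common_line d a ->
 (forall j, a 0 j \is a Num.int) -> (forall j, b 0 j \is a Num.int) ->
 (forall j, d 0 j \is a Num.int) ->
 1 <= s -> (forall j, `|a 0 j| <= s) -> (forall j, `|b 0 j| <= s) -> (forall j, `|d 0 j| <= s) ->
 0 <= eps -> `|qform A a| <= eps -> `|qform A b| <= eps -> `|qform A d| <= eps ->
 1 <= 20736 * (\sum_k \sum_i `|A i k|) ^+ 2 * s ^+ 16 * eps.
Proof.
move=> hsym hdet hL aL bL dL hab hdb hda Za Zb Zd s1 ha hb hd e0 hQa hQb hQd.
rewrite /not_on_common_line in hab hdb hda.
set n := cross a b; have ndef : n = cross a b by []; clearbody n.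
have hn0 : n != 0.
  apply/negP => /eqP hn.
  have c0 : a 0 1 * b 0 2 - a 0 2 * b 0 1 = 0 by rewrite -cross0 -ndef hn mxE.
  have c1 : a 0 2 * b 0 0 - a 0 0 * b 0 2 = 0 by rewrite -cross1 -ndef hn mxE.
  have c2 : a 0 0 * b 0 1 - a 0 1 * b 0 0 = 0 by rewrite -cross2 -ndef hn mxE.
  case: (eqVneq a 0) => [a0|anz].
    case: (eqVneq b 0) => [b0|bnz].
      refine (hab <[delta_mx (0%R : 'I_1) (0%R : 'I_3)]>%VS _ _).
        have enz : delta_mx (0%R : 'I_1) (0%R : 'I_3) != 0 :> 'rV[R]_3.
          apply/negP => /eqP/matrixP/(_ 0 0).
          by rewrite !mxE /= => /eqP; rewrite oner_eq0.
        by rewrite /is_line dim_vline enz.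
      by rewrite a0 b0 !mem0v.
    refine (hab <[b]>%VS _ _); first by rewrite /is_line dim_vline bnz.
    by rewrite a0 mem0v memv_line.
  have aa0 : dot a a != 0.
    apply/negP => /eqP h; move/eqP: anz; apply; rewrite /dot in h.
    by apply: row3P; rewrite mxE; nra.
  refine (hab <[a]>%VS _ _); first by rewrite /is_line dim_vline anz.
  split; first exact: memv_line.
  apply/vlineP; exists (dot b a / dot a a).
  have key : forall j, b 0 j * dot a a = dot b a * a 0 j -> b 0 j = (dot b a / dot a a *: a) 0 j.
    by move=> j e; rewrite mxE mulrAC -e mulfK.
  apply: row3P; apply: key; apply/eqP; rewrite -subr_eq0; apply/eqP.
  - transitivity (a 0 2 * (a 0 2 * b 0 0 - a 0 0 * b 0 2) - a 0 1 * (a 0 0 * b 0 1 - a 0 1 * b 0 0)).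
      rewrite /dot; ring.
    by rewrite c1 c2 !mulr0 subrr.
  - transitivity (a 0 0 * (a 0 0 * b 0 1 - a 0 1 * b 0 0) - a 0 2 * (a 0 1 * b 0 2 - a 0 2 * b 0 1)).
      rewrite /dot; ring.
    by rewrite c0 c2 !mulr0 subrr.
  - transitivity (a 0 1 * (a 0 1 * b 0 2 - a 0 2 * b 0 1) - a 0 0 * (a 0 2 * b 0 0 - a 0 0 * b 0 2)).
      rewrite /dot; ring.
    by rewrite c0 c1 !mulr0 subrr.
have bnz : b != 0.
  apply: contraNneq hn0 => b0; apply/eqP; rewrite ndef b0; apply: row3P;
  by rewrite ?cross0 ?cross1 ?cross2 !mxE !mulr0 subrr.
have anz : a != 0.
  apply: contraNneq hn0 => a0; apply/eqP; rewrite ndef a0; apply: row3P;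
  by rewrite ?cross0 ?cross1 ?cross2 !mxE !mul0r subrr.
set D := dot d n; have Ddef : D = dot d n by []; clearbody D.
have hD : D = 0.
  case: (eqVneq D 0) => // Dnz; exfalso.
  have sub : (fullv <= L)%VS.
    apply/subvP => x _.
    have -> : x = (dot x (cross b d) / D) *: a + (dot x (cross d a) / D) *: b + (dot x n / D) *: d.
      move: Dnz; rewrite Ddef ndef /dot ?cross0 ?cross1 ?cross2 => Dnz.
      apply: row3P; rewrite !mxE ?cross0 ?cross1 ?cross2 /=; field; exact: Dnz.
    by rewrite !memvD ?memvZ.
  by have := dimvS sub; rewrite dimT hL.
set K := dot n n; have Kdef : K = dot n n by []; clearbody K.
set P := dot (cross d b) n; have Pdef : P = dot (cross d b) n by []; clearbody P.
set P' := dot (cross a d) n; have P'def : P' = dot (cross a d) n by []; clearbody P'.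
have hdj : forall j, K * d 0 j = P * a 0 j + P' * b 0 j.
  move=> j; have e : K * d 0 j = P * a 0 j + P' * b 0 j + D * n 0 j.
    rewrite Kdef Pdef P'def Ddef ndef /dot.
    by case: (ord3 j) => [->|[->|->]]; rewrite ?cross0 ?cross1 ?cross2; ring.
  by rewrite e hD mul0r addr0.
have Zn : forall j, n 0 j \is a Num.int.
  move=> j; rewrite ndef; case: (ord3 j) => [->|[->|->]]; rewrite ?cross0 ?cross1 ?cross2;
  repeat first [apply: rpredB | apply: rpredD | apply: rpredN | apply: rpredM | apply: Za | apply: Zb | apply: Zd | apply: Zn].
have ZK : K \is a Num.int.
  by rewrite Kdef /dot; repeat first [apply: rpredB | apply: rpredD | apply: rpredN | apply: rpredM | apply: Za | apply: Zb | apply: Zd | apply: Zn].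
have ZP : P \is a Num.int.
  by rewrite Pdef /dot ?cross0 ?cross1 ?cross2; repeat first [apply: rpredB | apply: rpredD | apply: rpredN | apply: rpredM | apply: Za | apply: Zb | apply: Zd | apply: Zn].
have ZP' : P' \is a Num.int.
  by rewrite P'def /dot ?cross0 ?cross1 ?cross2; repeat first [apply: rpredB | apply: rpredD | apply: rpredN | apply: rpredM | apply: Za | apply: Zb | apply: Zd | apply: Zn].
have K1 : 1 <= K.
  have q0 := sqr_ge0 (n 0 0); have q1 := sqr_ge0 (n 0 1); have q2 := sqr_ge0 (n 0 2).
  rewrite Kdef /dot; rewrite expr2 in q0 q1 q2.
  case: (eqVneq (n 0 0) 0) => h0; last by have := sqr_intr_ge1 (Zn 0) h0; rewrite expr2; lra.
  case: (eqVneq (n 0 1) 0) => h1; last by have := sqr_intr_ge1 (Zn 1) h1; rewrite expr2; lra.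
  case: (eqVneq (n 0 2) 0) => h2; last by have := sqr_intr_ge1 (Zn 2) h2; rewrite expr2; lra.
  by move/eqP: hn0; case; apply: row3P; rewrite mxE.
have Knz : K != 0 by apply/eqP => K0; move: K1; rewrite K0; lra.
have Pnz : P != 0.
  apply/eqP => P0; refine (hdb <[b]>%VS _ _); first by rewrite /is_line dim_vline bnz.
  split; last exact: memv_line.
  apply/vlineP; exists (P' / K).
  have key : forall j, d 0 j = (P' / K *: b) 0 j.
    move=> j; rewrite mxE -[d 0 j](mulKf Knz) hdj P0 mul0r add0r.
    by rewrite mulrA [K^-1 * P']mulrC.
  by apply: row3P; apply: key.
have P'nz : P' != 0.
  apply/eqP => P0; refine (hda <[a]>%VS _ _); first by rewrite /is_line dim_vline anz.
  split; last exact: memv_line.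
  apply/vlineP; exists (P / K).
  have key : forall j, d 0 j = (P / K *: a) 0 j.
    move=> j; rewrite mxE -[d 0 j](mulKf Knz) hdj P0 mul0r addr0.
    by rewrite mulrA [K^-1 * P]mulrC.
  by apply: row3P; apply: key.
have PP1 : 1 <= `|P * P'| by apply: norm_intr_ge1; rewrite ?rpredM ?mulf_neq0.
have hn : forall j, `|n 0 j| <= 2 * s ^+ 2 by rewrite ndef; exact: cross_bound.
have hcdb : forall j, `|cross d b 0 j| <= 2 * s ^+ 2 by exact: cross_bound.
have hcad : forall j, `|cross a d 0 j| <= 2 * s ^+ 2 by exact: cross_bound.
have e4 : 12 * s ^+ 4 = 3 * (2 * s ^+ 2 * (2 * s ^+ 2)) by ring.
have hKb : `|K| <= 12 * s ^+ 4.
  rewrite Kdef /dot e4; apply: dot3_bound; exact: hn.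
have hPb : `|P| <= 12 * s ^+ 4.
  rewrite Pdef /dot e4; apply: dot3_bound; (exact: hn || exact: hcdb).
have hP'b : `|P'| <= 12 * s ^+ 4.
  rewrite P'def /dot e4; apply: dot3_bound; (exact: hn || exact: hcad).
have e8 : 144 * s ^+ 8 = 12 * s ^+ 4 * (12 * s ^+ 4) by ring.
have sqb : forall x, `|x| <= 12 * s ^+ 4 -> `|x ^+ 2| <= 144 * s ^+ 8.
  by move=> x hx; rewrite e8 expr2; apply: prod_bound.
have s10 : A 1 0 = A 0 1 by rewrite -{1}hsym mxE.
have s20 : A 2 0 = A 0 2 by rewrite -{1}hsym mxE.
have s21 : A 2 1 = A 1 2 by rewrite -{1}hsym mxE.
have qE : forall x, qform A x = Bf A x x by [].
have F9 : K ^+ 2 * qform A d = P ^+ 2 * qform A a + 2 * P * P' * Bf A a b + P' ^+ 2 * qform A b.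
  rewrite !qE !B_coord.
  transitivity (Bc A (K * d 0 0) (K * d 0 1) (K * d 0 2) (K * d 0 0) (K * d 0 1) (K * d 0 2)).
    rewrite /Bc; ring.
  rewrite !hdj /Bc s10 s20 s21; ring.
set B0 := Bf A a b.
have F10 : `|B0| <= 216 * s ^+ 8 * eps.
  have e : (P * P') * (2 * B0) = K ^+ 2 * qform A d - P ^+ 2 * qform A a - P' ^+ 2 * qform A b.
    by rewrite F9 /B0; ring.
  have t1 : `|K ^+ 2 * qform A d| <= 144 * s ^+ 8 * eps.
    by rewrite normrM; apply: ler_pM => //; apply: sqb.
  have t2 : `|P ^+ 2 * qform A a| <= 144 * s ^+ 8 * eps.
    by rewrite normrM; apply: ler_pM => //; apply: sqb.
  have t3 : `|P' ^+ 2 * qform A b| <= 144 * s ^+ 8 * eps.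
    by rewrite normrM; apply: ler_pM => //; apply: sqb.
  have u := ler_normB (K ^+ 2 * qform A d - P ^+ 2 * qform A a) (P' ^+ 2 * qform A b).
  have v := ler_normB (K ^+ 2 * qform A d) (P ^+ 2 * qform A a).
  rewrite -e in u.
  have w : `|2 * B0| <= `|(P * P') * (2 * B0)|.
    rewrite [X in _ <= X]normrM; rewrite -{1}[`|2 * B0|]mul1r.
    by apply: ler_wpM2r.
  have w2 : `|2 * B0| = 2 * `|B0| by rewrite normrM ger0_norm.
  lra.
set al := \sum_k \sum_i `|A i k|.
set N : 'M[R]_3 := \matrix_(i < 3, j < 3) nth (a 0 j) [:: a 0 j; b 0 j; n 0 j] i.
have Ndef : N = \matrix_(i < 3, j < 3) nth (a 0 j) [:: a 0 j; b 0 j; n 0 j] i by [].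
clearbody N.
have r0 : row 0 N = a by apply/rowP => k; rewrite Ndef !mxE.
have r1 : row 1 N = b by apply/rowP => k; rewrite Ndef !mxE.
have ss : s <= 2 * s ^+ 2 by rewrite expr2; nra.
have hNb : forall i k, `|N i k| <= 2 * s ^+ 2.
  move=> i k; rewrite Ndef mxE; case: (ord3 i) => [->|[->|->]] /=.
  - exact: le_trans (ha k) ss.
  - exact: le_trans (hb k) ss.
  - exact: hn.
have hG : forall i j, `|(N *m A *m N^T) i j| <= 2 * s ^+ 2 * (2 * s ^+ 2) * al.
  by move=> i j; rewrite G_entry; apply: B_bound => k; rewrite mxE; apply: hNb.
have detN : \det N = K.
  rewrite Ndef det33 !mxE /= Kdef ndef /dot ?cross0 ?cross1 ?cross2; ring.
have detG : \det (N *m A *m N^T) = K * K.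
  by rewrite !det_mulmx det_tr detN hdet mulr1.
rewrite det33 in detG.
have s8 : 1 <= s ^+ 8 by apply: exprn_ege1.
have eb : eps <= 216 * s ^+ 8 * eps by nra.
have g00 : `|(N *m A *m N^T) 0 0| <= 216 * s ^+ 8 * eps.
  by rewrite G_entry r0 -qE; apply: le_trans hQa eb.
have g11 : `|(N *m A *m N^T) 1 1| <= 216 * s ^+ 8 * eps.
  by rewrite G_entry r1 -qE; apply: le_trans hQb eb.
have g01 : `|(N *m A *m N^T) 0 1| <= 216 * s ^+ 8 * eps by rewrite G_entry r0 r1.
have g10 : `|(N *m A *m N^T) 1 0| <= 216 * s ^+ 8 * eps.
  rewrite G_entry r0 r1 (_ : Bf A b a = B0) //.
  by rewrite /B0 !B_coord /Bc s10 s20 s21; ring.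
have := det_small g00 g01 g10 g11 (hG 0 2) (hG 1 2) (hG 2 0) (hG 2 1) (hG 2 2) (hG 1 1) (hG 1 0).
rewrite detG.
have KK : 1 <= K * K by nra.
have -> : 20736 * al ^+ 2 * s ^+ 16 * eps =
   6 * (216 * s ^+ 8 * eps) * (2 * s ^+ 2 * (2 * s ^+ 2) * al) ^+ 2 by ring.
move=> h; apply: le_trans KK (le_trans (ler_norm _) h).
Qed.

Theorem lemma2p5 (R : realType) (A : 'M[R]_3) :
  is_symmetric A -> indefinite A -> \det A = 1 ->
  exists c : R, 0 < c /\
    forall (L : {vspace 'rV[R]_3}) (m : 'I_3 -> 'rV[int]_3) (eps r : R),
      is_plane L ->
      (forall i, zvec R (m i) \in L) ->
      (forall i j, i != j -> not_on_common_line (zvec R (m i)) (zvec R (m j))) ->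
      0 <= eps -> eps < 1 -> 1 < r ->
      (forall i, `|qform A (zvec R (m i))| <= eps) ->
      (forall i, r < supnorm (zvec R (m i)) < r ^+ 2) ->
      c * r ^- 64 <= eps.
Proof.
move=> hsym _ hdet.
set al := \sum_k \sum_i `|A i k|.
have al0 : 0 <= al by apply: sumr_ge0 => k _; apply: sumr_ge0.
have C0 : 0 < 20736 * (1 + al) ^+ 2.
  by apply: mulr_gt0 => //; apply: exprn_gt0; lra.
exists (1 / (20736 * (1 + al) ^+ 2)); split; first by apply: divr_gt0.
move=> L m eps r hL hmL hncl he0 he1 hr hQ hnorm.
have Z : forall i j, zvec R (m i) 0 j \is a Num.int by move=> i j; rewrite mxE intr_int.
have hb : forall i j, `|zvec R (m i) 0 j| <= r ^+ 2.
  move=> i j; case/andP: (hnorm i) => _ h; apply: le_trans (ltW h).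
  exact: (le_bigmax 0 (fun j => `|zvec R (m i) 0 j|) j).
have r2 : 1 <= r ^+ 2 by apply: exprn_ege1; lra.
have := core hsym hdet hL (hmL 0) (hmL 1) (hmL 2) (hncl 0 1 isT) (hncl 2 1 isT) (hncl 2 0 isT)
  (Z 0) (Z 1) (Z 2) r2 (hb 0) (hb 1) (hb 2) he0 (hQ 0) (hQ 1) (hQ 2).
rewrite -exprM (_ : (2 * 16)%N = 32%N) // -/al => h.
have r64 : 0 < r ^+ 64 by apply: exprn_gt0; lra.
rewrite mul1r -invfM -[X in X <= _]mul1r ler_pdivrMr; last by apply: mulr_gt0.
apply: le_trans h _.
have a2 : al ^+ 2 <= (1 + al) ^+ 2 by apply: lerXn2r; rewrite ?nnegrE; lra.
have r3 : r ^+ 32 <= r ^+ 64 by apply: ler_weXn2l => //; lra.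
have k : 20736 * al ^+ 2 * r ^+ 32 <= 20736 * (1 + al) ^+ 2 * r ^+ 64.
  apply: ler_pM => //.
  - by apply: mulr_ge0 => //; apply: exprn_ge0.
  - by apply: exprn_ge0; lra.
  - by apply: ler_wpM2l.
by rewrite [eps * _]mulrC; apply: ler_wpM2r.
Qed.
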